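(* For every integer $N\ge 0$, let $T_{2\times 3}(6,N)$ be the number of tilings of a $6\times N$ rectangle by $N$ tiles of size $2\times 3$. Then, as formal power series, \[ \sum_{N\ge 0} T_{2\times 3}(6,N)\,z^N=\frac{1}{1-z^2-z^3}. \]
   Context: A tiling of an $m\times n$ rectangle (width $m$, length $n$, made of $mn$ unit squares) by $a\times b$ tiles is a partition of the rectangle into non-overlapping axis-parallel $a\times b$ rectangles with integer corner coordinates, each placed in either of its two orientations. Tilings related by reflections or rotations of the rectangle are counted as distinct. The empty tiling counts once for $N=0$. *)

(* Defs.v *)
From mathcomp Require Import all_boot all_order all_algebra.
Unset Printing Implicit Defensive.
Import GRing.Theory Num.Theory.
Local Open Scope ring_scope.

(* Cells of an m x n rectangle: (i, j) with i < m (width), j < n (length). *)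
Definition cell (m n : nat) := ('I_m * 'I_n)%type.

Definition rect (m n x y w h : nat) : {set cell m n} :=
  [set c : cell m n | (x <= c.1 < x + w)%N && (y <= c.2 < y + h)%N].

Definition is_tile (m n a b : nat) (S : {set cell m n}) : bool :=
  [exists x : 'I_m.+1, exists y : 'I_n.+1,
     [&& (x + a <= m)%N, (y + b <= n)%N & S == rect m n x y a b]
  || [&& (x + b <= m)%N, (y + a <= n)%N & S == rect m n x y b a]].

Definition is_tiling (m n a b : nat) (P : {set {set cell m n}}) : bool :=
  partition P [set: cell m n] && [forall S in P, is_tile m n a b S].

Definition T (m n a b : nat) : nat := #|[set P | is_tiling m n a b P]|.

Definition fps := nat -> int.
Definition fps_mul (f g : fps) : fps :=
  fun k => (\sum_(i < k.+1) f i * g (k - i)%N)%R.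
Definition fps_one : fps := fun k => ((k == 0%N) : nat)%:Z.
Definition den_2x3 : fps :=
  fun k => (((k == 0%N) : nat)%:Z - ((k == 2%N) : nat)%:Z - ((k == 3%N) : nat)%:Z)%R.

(* Main.v *)
Require Import Defs.
From mathcomp Require Import all_boot all_order all_algebra zify.

Definition reg n y : {set cell 6 n} := [set c : cell 6 n | (y <= c.2)%N].
Definition tiling_of n (D : {set cell 6 n}) (P : {set {set cell 6 n}}) :=
  partition P D && [forall S in P, is_tile 6 n 2 3 S].
Arguments tiling_of {n}.

Lemma mem_rect n x y w h (c : cell 6 n) :
  (c \in rect 6 n x y w h) = (x <= c.1 < x + w) && (y <= c.2 < y + h).
Proof. by rewrite inE. Qed.

Ltac cellarith := let c := fresh "c" in move=> c; rewrite !inE;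
  move: (ltn_ord c.1) (ltn_ord c.2); move: (val c.1) (val c.2); lia.
Ltac setarith := apply/setP; cellarith.
Ltac disjarith := rewrite -setI_eq0; apply/eqP; apply/setP; cellarith.

Lemma count_add n (D D' S : {set cell 6 n}) (K : {set {set cell 6 n}} -> bool) :
  S != set0 -> is_tile 6 n 2 3 S -> D = S :|: D' -> [disjoint S & D'] ->
  #|[set P | tiling_of D P && (S \in P) && K P]| = #|[set P | tiling_of D' P && K (S |: P)]|.
Proof.
move=> S0 tS DE dis.
have SnQ : forall Q, tiling_of D' Q -> S \notin Q.
  move=> Q /andP[pQ _]; apply/negP => SQ.
  move: dis; rewrite -setI_eq0 (setIidPl (partitionS pQ SQ)) => /eqP E.
  by rewrite E eqxx in S0.
have -> : [set P | tiling_of D P && (S \in P) && K P] =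
    (fun Q => S |: Q) @: [set P | tiling_of D' P && K (S |: P)].
  apply/setP => P; rewrite inE; apply/idP/imsetP.
  - case/andP => /andP[/andP[pP tP] SP] KP. exists (P :\ S); last by rewrite setD1K.
    rewrite inE; apply/andP; split; last by rewrite setD1K.
    apply/andP; split.
      have := partitionD1 pP SP. rewrite DE setDUl setDv set0U.
      have -> : D' :\: S = D' by apply/setDidPl; rewrite disjoint_sym.
      by [].
    apply/forall_inP => S1; rewrite inE => /andP[_ S1P]; exact: (forall_inP tP).
  - case=> Q; rewrite inE => /andP[/andP[pQ tQ] KQ] ->.
    rewrite KQ setU11 !andbT; apply/andP; split.
      by rewrite DE; apply: partitionU1.
    apply/forall_inP => S1; rewrite !inE => /orP[/eqP -> //|]; exact: (forall_inP tQ).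
rewrite card_in_imset //.
move=> Q1 Q2; rewrite !inE => /andP[h1 _] /andP[h2 _] E.
by rewrite -(setU1K (SnQ _ h1)) E setU1K // SnQ.
Qed.

Arguments count_add {n D D' S K}.

Lemma tile_inv {n} S : is_tile 6 n 2 3 S -> exists x y w h, S = rect 6 n x y w h /\
  ((w = 2 /\ h = 3) \/ (w = 3 /\ h = 2)) /\ x + w <= 6 /\ y + h <= n.
Proof.
case/existsP => x /existsP [y /orP [/and3P [h1 h2 /eqP E] | /and3P[h1 h2 /eqP E]]].
  by exists x, y, 2, 3; split => //; split; [left|].
by exists x, y, 3, 2; split => //; split; [right|].
Qed.

Arguments tile_inv {n S}.

Lemma rect_tile n x y w h : ((w = 2 /\ h = 3) \/ (w = 3 /\ h = 2)) -> x + w <= 6 -> y + h <= n ->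
  is_tile 6 n 2 3 (rect 6 n x y w h).
Proof.
move=> sh hx hy; have Hx : x < 7 by lia. have Hy : y < n.+1 by lia.
apply/existsP; exists (Ordinal Hx); apply/existsP; exists (Ordinal Hy) => /=.
by case: sh hx hy => [[-> ->]|[-> ->]] hx hy; rewrite hx hy eqxx ?orbT.
Qed.

Lemma cover_mem {n} (P : {set {set cell 6 n}}) D c : partition P D -> c \in D -> exists2 S, S \in P & c \in S.
Proof. move=> pP; rewrite -(cover_partition pP) => /bigcupP [S SP cS]; by exists S. Qed.

Arguments cover_mem {n P D c}.

Lemma same_block {n} (P : {set {set cell 6 n}}) D S1 S2 c : partition P D -> S1 \in P -> S2 \in P ->
  c \in S1 -> c \in S2 -> S1 = S2.
Proof.
move=> pP h1 h2 c1 c2; apply/eqP; apply: contraT => ne.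
move/trivIsetP: (partition_trivIset pP) => /(_ S1 S2 h1 h2 ne) dis.
by rewrite (disjointFr dis c1) in c2.
Qed.

Arguments same_block {n P D S1 S2 c}.

Lemma L_step n y P i : tiling_of (reg n y) P -> i < 6 -> y < n -> exists x w h,
  rect 6 n x y w h \in P /\ x <= i < x + w /\ ((w = 2 /\ h = 3) \/ (w = 3 /\ h = 2)) /\
  x + w <= 6 /\ y + h <= n.
Proof.
move=> /andP[pP tP] Hi Hy.
have cin : ((Ordinal Hi, Ordinal Hy) : cell 6 n) \in reg n y by rewrite inE /=.
case: (cover_mem pP cin) => S SP cS.
case: (tile_inv (forall_inP tP S SP)) => x [y' [w [h [E [sh [hx hy]]]]]].
subst S. move: cS; rewrite mem_rect /= => cS.
have Hx : x < 6 by lia. have Hy' : y' < n by lia.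
have dS : ((Ordinal Hx, Ordinal Hy') : cell 6 n) \in rect 6 n x y' w h.
  rewrite mem_rect /=; case: sh => [[-> ->]|[-> ->]]; lia.
have := subsetP (partitionS pP SP) _ dS; rewrite inE /= => yy'.
have ey : y' = y by lia. subst y'. exists x, w, h; split => //; split => //; lia.
Qed.

Lemma same_row n y P x1 w1 h1 x2 w2 h2 i : tiling_of (reg n y) P -> y < n ->
  rect 6 n x1 y w1 h1 \in P -> rect 6 n x2 y w2 h2 \in P ->
  x1 <= i < x1 + w1 -> x2 <= i < x2 + w2 -> 0 < h1 -> 0 < h2 ->
  x1 + w1 <= 6 -> x2 + w2 <= 6 -> x1 = x2 /\ w1 = w2.
Proof.
move=> /andP[pP _] Hy S1 S2 i1 i2 p1 p2 b1 b2.
have Hi : i < 6 by lia.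
have E := same_block pP S1 S2 (c := (Ordinal Hi, Ordinal Hy)) 
  (ltac:(rewrite mem_rect /=; lia)) (ltac:(rewrite mem_rect /=; lia)).
have key : forall j (Hj : j < 6), (x1 <= j < x1 + w1) = (x2 <= j < x2 + w2).
  move=> j Hj; have := mem_rect n x1 y w1 h1 ((Ordinal Hj, Ordinal Hy) : cell 6 n).
  rewrite E mem_rect /=; lia.
have k1 := key x1 ltac:(lia). have k2 := key x2 ltac:(lia).
have k3 := key (x1 + w1).-1 ltac:(lia). have k4 := key (x2 + w2).-1 ltac:(lia).
lia.
Qed.

Arguments L_step {n y P} i.
Arguments same_row {n y P x1 w1 h1 x2 w2 h2} i.

Definition A1 n y := rect 6 n 0 y 3 2.
Definition A2 n y := rect 6 n 3 y 3 2.
Definition B1 n y := rect 6 n 0 y 2 3.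
Definition B2 n y := rect 6 n 2 y 2 3.
Definition B3 n y := rect 6 n 4 y 2 3.

Lemma L_geo n y P : tiling_of (reg n y) P -> y < n ->
  (A1 n y \in P /\ A2 n y \in P /\ y + 2 <= n) \/
  (B1 n y \in P /\ B2 n y \in P /\ B3 n y \in P /\ y + 3 <= n).
Proof.
move=> tP Hy.
have [x0 [w0 [h0 [S0 [r0 [sh0 [b0 c0]]]]]]] := L_step 0 tP isT Hy.
have ex0 : x0 = 0 by lia. subst x0.
case: sh0 => [[? ?]|[? ?]]; subst w0 h0.
- right.
  have [x1 [w1 [h1 [S1 [r1 [sh1 [b1 c1]]]]]]] := L_step 2 tP isT Hy.
  case: (ltnP x1 2) => hx1.
    by exfalso; move: (same_row x1 tP Hy S0 S1); lia.
  have ex1 : x1 = 2 by lia. subst x1.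
  case: sh1 => [[? ?]|[? ?]]; subst w1 h1; last first.
    have [x2 [w2 [h2 [S2 [r2 [sh2 [b2 c2]]]]]]] := L_step 5 tP isT Hy.
    by exfalso; move: (same_row x2 tP Hy S1 S2); lia.
  have [x2 [w2 [h2 [S2 [r2 [sh2 [b2 c2]]]]]]] := L_step 4 tP isT Hy.
  case: (ltnP x2 4) => hx2.
    by exfalso; move: (same_row x2 tP Hy S1 S2); lia.
  have ex2 : x2 = 4 by lia. subst x2.
  case: sh2 => [[? ?]|[? ?]]; subst w2 h2; last by lia.
  by split.
- left.
  have [x1 [w1 [h1 [S1 [r1 [sh1 [b1 c1]]]]]]] := L_step 3 tP isT Hy.
  case: (ltnP x1 3) => hx1.
    by exfalso; move: (same_row x1 tP Hy S0 S1); lia.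
  have ex1 : x1 = 3 by lia. subst x1.
  case: sh1 => [[? ?]|[? ?]]; subst w1 h1; last by split.
  have [x2 [w2 [h2 [S2 [r2 [sh2 [b2 c2]]]]]]] := L_step 5 tP isT Hy.
  by exfalso; move: (same_row x2 tP Hy S1 S2); lia.
Qed.

Lemma A1B1 n y P : tiling_of (reg n y) P -> y < n -> A1 n y \in P -> B1 n y \in P -> False.
Proof.
move=> tP Hy a b; move: (same_row 0 tP Hy a b); lia.
Qed.

Arguments L_geo {n y P}.
Arguments A1B1 {n y P}.

Definition Q n y := #|[set P | tiling_of (reg n y) P]|.

Lemma rect_ne n x y w h x' y' w' h' i j (Hi : i < 6) (Hj : j < n) :
  (x <= i < x + w) && (y <= j < y + h) != (x' <= i < x' + w') && (y' <= j < y' + h') ->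
  (rect 6 n x y w h == rect 6 n x' y' w' h') = false.
Proof.
move=> ne; apply/negbTE/eqP => E.
have := mem_rect n x y w h ((Ordinal Hi, Ordinal Hj) : cell 6 n).
rewrite E mem_rect /= => E2; by rewrite E2 eqxx in ne.
Qed.

Arguments rect_ne {n x y w h x' y' w' h'} i j {Hi Hj}.

Lemma rect_neq0 n x y w h : 0 < w -> 0 < h -> x < 6 -> y < n -> rect 6 n x y w h != set0.
Proof.
move=> pw ph Hx Hy; apply/set0Pn; exists ((Ordinal Hx, Ordinal Hy) : cell 6 n).
rewrite mem_rect /=; lia.
Qed.

Lemma partA n y : y < n ->
  #|[set P | tiling_of (reg n y) P] :&: [set P : {set {set cell 6 n}} | A1 n y \in P]| =
  if y + 2 <= n then Q n (y + 2) else 0.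
Proof.
move=> Hy.
have -> : [set P | tiling_of (reg n y) P] :&: [set P : {set {set cell 6 n}} | A1 n y \in P] =
    [set P | tiling_of (reg n y) P && (A1 n y \in P) && (A2 n y \in P)].
  apply/setP => P; rewrite !inE; apply/idP/idP.
  - move=> /andP[tP aP]; rewrite tP aP /=.
    case: (L_geo tP Hy) => [[_ [-> _]] //|[b _]]; exfalso; exact: A1B1 tP Hy aP b.
  - by case/andP => /andP[-> ->].
case: ifP => H; last first.
  apply/eqP; rewrite cards_eq0; apply/eqP; apply/setP => P; rewrite !inE.
  apply/negbTE/negP => /andP[/andP[tP _] _]; case: (L_geo tP Hy); lia.
rewrite (count_add (D' := A2 n y :|: reg n (y+2)) (K := fun P : {set {set cell 6 n}} => A2 n y \in P)); first last.
- rewrite /A1 /A2; disjarith.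
- rewrite /A1 /A2; setarith.
- by apply: rect_tile => //; right.
- by apply: rect_neq0.
have -> : [set P | tiling_of (A2 n y :|: reg n (y + 2)) P && (A2 n y \in A1 n y |: P)] =
   [set P | tiling_of (A2 n y :|: reg n (y + 2)) P && (A2 n y \in P) && (fun _ => true) P].
  apply/setP => P; rewrite !inE andbT /A1 /A2 (rect_ne 3 y (Hi := isT) (Hj := Hy)) //=; lia.
rewrite (count_add (D' := reg n (y+2)) (K := fun _ : {set {set cell 6 n}} => true)); first last.
- rewrite /A2; disjarith.
- rewrite /A2; setarith.
- by apply: rect_tile => //; right.
- by apply: rect_neq0.
by rewrite /Q; apply: eq_card => P; rewrite !inE andbT.
Qed.

Lemma partB n y : y < n ->
  #|[set P | tiling_of (reg n y) P] :\: [set P : {set {set cell 6 n}} | A1 n y \in P]| =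
  if y + 3 <= n then Q n (y + 3) else 0.
Proof.
move=> Hy.
have -> : [set P | tiling_of (reg n y) P] :\: [set P : {set {set cell 6 n}} | A1 n y \in P] =
    [set P | tiling_of (reg n y) P && (B1 n y \in P) && ((B2 n y \in P) && (B3 n y \in P))].
  apply/setP => P; rewrite !inE; apply/idP/idP.
  - move=> /andP[aP tP]; rewrite tP /=.
    case: (L_geo tP Hy) => [[a _]|[-> [-> [-> _]]]] //. by rewrite a in aP.
  - case/andP => /andP[tP bP] _; rewrite tP andbT; apply/negP => aP.
    exact: A1B1 tP Hy aP bP.
case: ifP => H; last first.
  apply/eqP; rewrite cards_eq0; apply/eqP; apply/setP => P; rewrite !inE.
  apply/negbTE/negP => /andP[/andP[tP bP] _]; case: (L_geo tP Hy) => [[a _]|].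
    exact: A1B1 tP Hy a bP.
  lia.
rewrite (count_add (D' := B2 n y :|: (B3 n y :|: reg n (y+3)))
   (K := fun P : {set {set cell 6 n}} => (B2 n y \in P) && (B3 n y \in P))); first last.
- rewrite /B1 /B2 /B3; disjarith.
- rewrite /B1 /B2 /B3; setarith.
- by apply: rect_tile => //; left.
- by apply: rect_neq0.
have -> : [set P | tiling_of (B2 n y :|: (B3 n y :|: reg n (y + 3))) P &&
     ((B2 n y \in B1 n y |: P) && (B3 n y \in B1 n y |: P))] =
   [set P | tiling_of (B2 n y :|: (B3 n y :|: reg n (y + 3))) P && (B2 n y \in P) &&
     (fun P : {set {set cell 6 n}} => B3 n y \in P) P].
  apply/setP => P; rewrite !inE /B1 /B2 /B3 (rect_ne 2 y (Hi := isT) (Hj := Hy)) /=; last lia.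
  rewrite (rect_ne 4 y (Hi := isT) (Hj := Hy)) /=; last lia.
  by rewrite andbA.
rewrite (count_add (D' := B3 n y :|: reg n (y+3))
   (K := fun P : {set {set cell 6 n}} => B3 n y \in P)); first last.
- rewrite /B2 /B3; disjarith.
- rewrite /B2 /B3; setarith.
- by apply: rect_tile => //; left.
- by apply: rect_neq0.
have -> : [set P | tiling_of (B3 n y :|: reg n (y + 3)) P && (B3 n y \in B2 n y |: P)] =
   [set P | tiling_of (B3 n y :|: reg n (y + 3)) P && (B3 n y \in P) &&
     (fun _ : {set {set cell 6 n}} => true) P].
  apply/setP => P; rewrite !inE andbT /B2 /B3 (rect_ne 4 y (Hi := isT) (Hj := Hy)) //=; lia.
rewrite (count_add (D' := reg n (y+3)) (K := fun _ : {set {set cell 6 n}} => true)); first last.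
- rewrite /B3; disjarith.
- rewrite /B3; setarith.
- by apply: rect_tile => //; left.
- by apply: rect_neq0.
by rewrite /Q; apply: eq_card => P; rewrite !inE andbT.
Qed.

Lemma Q_split n y : y < n ->
  Q n y = (if y + 2 <= n then Q n (y + 2) else 0) + (if y + 3 <= n then Q n (y + 3) else 0).
Proof.
move=> Hy; rewrite -(partA n y Hy) -(partB n y Hy) /Q.
by rewrite cardsID.
Qed.

Lemma Q_base n : Q n n = 1.
Proof.
rewrite /Q.
have -> : reg n n = set0 by setarith.
rewrite -[RHS](cards1 (set0 : {set {set cell 6 n}})); apply: eq_card => P.
rewrite !inE /tiling_of partition_set0; apply/idP/idP.
  by case/andP.
move=> /eqP ->; rewrite eqxx /=; apply/forall_inP => S; by rewrite inE.
Qed.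

Fixpoint c (k : nat) : nat :=
  match k with
  | 0 => 1
  | 1 => 0
  | 2 => 1
  | (k'.+1 as k1).+2 => c k1 + c k'
  end.

Lemma c_rec k : 0 < k -> c k = (if 2 <= k then c (k - 2) else 0) + (if 3 <= k then c (k - 3) else 0).
Proof.
case: k => [//|[//|[//|k]]] _ /=. by rewrite !subSS subn0.
Qed.

Lemma Qc n k : forall y, n - y = k -> y <= n -> Q n y = c k.
Proof.
elim: k {-2}k (leqnn k) => [|K IH] k.
  rewrite leqn0 => /eqP -> y Hk Hyn.
  have -> : y = n by lia. by rewrite Q_base.
move=> Hk y Hyk Hyn.
case: (ltnP y n) => Hy; last first.
  have -> : y = n by lia. have -> : k = 0 by lia. by rewrite Q_base.
rewrite Q_split // c_rec; last by lia.
congr (_ + _).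
  case: ifP => h1; case: ifP => h2 //; try lia.
  apply: IH; lia.
case: ifP => h1; case: ifP => h2 //; try lia.
apply: IH; lia.
Qed.

Lemma T_Q N : T 6 N 2 3 = Q N 0.
Proof.
rewrite /T /Q; have -> : reg N 0 = setT by setarith.
by [].
Qed.

Lemma sum_delta (g : nat -> int) j k :
  (\sum_(i < k.+1) ((i == j :> nat) : nat)%:Z * g i = ((j <= k) : nat)%:Z * g j)%R.
Proof.
case: (leqP j k) => H.
  have Hj : j < k.+1 by lia.
  rewrite (bigD1 (Ordinal Hj)) //= eqxx big1 ?GRing.addr0 //.
  move=> i ne; have -> : (i == j :> nat) = false.
    apply/negbTE; apply: contra ne => /eqP E; apply/eqP; apply: val_inj => /=; exact: E.
  by rewrite GRing.mul0r.
rewrite big1 ?GRing.mul0r // => i _.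
have -> : (i == j :> nat) = false by have := ltn_ord i; lia.
by rewrite GRing.mul0r.
Qed.

Lemma Tc N : T 6 N 2 3 = c N.
Proof. by rewrite T_Q (Qc N N 0) ?subn0. Qed.

Local Open Scope ring_scope.

Theorem mainTheorem9 :
  forall k : nat,
    fps_mul den_2x3 (fun N => (T 6 N 2 3)%:Z) k = fps_one k.
Proof.
move=> k; rewrite /fps_mul /den_2x3 /fps_one.
under eq_bigr => i _ do rewrite !GRing.mulrBl.
rewrite !GRing.sumrB.
rewrite (sum_delta (fun i => (T 6 (k - i) 2 3)%:Z) 0 k).
rewrite (sum_delta (fun i => (T 6 (k - i) 2 3)%:Z) 2 k).
rewrite (sum_delta (fun i => (T 6 (k - i) 2 3)%:Z) 3 k).
rewrite !Tc.
case: k => [|[|[|k]]] //=.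
rewrite !subSS !subn0 /= PoszD.
rewrite !GRing.mul1r. lia.
Qed.
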